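(* Let $B,V$ be non-empty disjoint compact subsets of $\mathbf S^3$. There is a constant $C>0$ such that for any $x,x'\in B$, any $u,u'\in\mathcal L_{\mathbb C}$ such that the chain $L_u$ passes through $x$, the chain $L_{u'}$ passes through $x'$, and both meet $V$, and any $r>0$, \[\pi_x^{-1}(B(u,r))\cap V\subset\pi_{x'}^{-1}\big(B(u',C(r+d_E(u,u')))\big),\] where $B(u,r)$ denotes the closed $d_E$-ball in $\mathbb P^2_{\mathbb C}$.
   Context: On $\mathbb{C}^3$: $u\cdot v=\sum u_i\bar v_i$, $\|u\|=\sqrt{u\cdot u}$, $\langle u,v\rangle=u_0\bar v_0-u_1\bar v_1-u_2\bar v_2$, $q(u)=\langle u,u\rangle$, $\|u\wedge v\|^2=\|u\|^2\|v\|^2-|u\cdot v|^2$. On $\mathbb P^2_{\mathbb C}$, $d_E(u,v)=\|u\wedge v\|/(\|u\|\|v\|)$. $\mathbf S^3=\{u:q(u)=0\}$. $\mathcal L_{\mathbb C}=\{w:q(w)<0\}$, $w^\perp=\{u:\langle u,w\rangle=0\}$, $L_w=w^\perp\cap\mathbf S^3$ (a chain). For $x\in\mathbf S^3$ and $y\in\mathbf S^3\setminus\{x\}$, $\pi_x(y)$ is the unique intersection point of $x^\perp$ and $y^\perp$; $\pi_x^{-1}(A)=\{y\in\mathbf S^3\setminus\{x\}:\pi_x(y)\in A\}$. *)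

(* Defs.v *)
From mathcomp Require Import all_boot all_order all_algebra.
From mathcomp Require Import all_classical all_reals all_analysis.
From mathcomp Require Import complex.
Import Order.TTheory GRing.Theory Num.Theory.
Import numFieldNormedType.Exports.
Set Implicit Arguments.
Unset Strict Implicit.
Unset Printing Implicit Defensive.
Local Open Scope ring_scope.
Local Open Scope classical_set_scope.

(* Vectors of C^3, C = R[i]; points of P^2_C are represented by nonzero
   vectors, and subsets of P^2_C by cones (sets closed under nonzero scaling). *)
Notation C3 R := 'rV[R[i]]_3.

Section Defs.
Variable R : realType.

Definition hdot (u v : C3 R) : R[i] := \sum_(i < 3) u ord0 i * (v ord0 i)^*.
Definition enorm (u : C3 R) : R := Num.sqrt (complex.Re (hdot u u)).
Definition abs2 (z : R[i]) : R := complex.Re (z * z^*).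
Definition hform (u v : C3 R) : R[i] :=
  u ord0 0 * (v ord0 0)^* - u ord0 1 * (v ord0 1)^* - u ord0 2 * (v ord0 2)^*.
Definition qf (u : C3 R) : R := complex.Re (hform u u).
(* ||u /\ v||^2 = ||u||^2 ||v||^2 - |u.v|^2 *)
Definition wedge2 (u v : C3 R) : R :=
  enorm u ^+ 2 * enorm v ^+ 2 - abs2 (hdot u v).
Definition dE (u v : C3 R) : R := Num.sqrt (wedge2 u v) / (enorm u * enorm v).

Definition proj_eq (u v : C3 R) : Prop := exists c : R[i], c != 0 /\ u = c *: v.

(* S^3 = {q = 0} (projectivized null cone) *)
Definition S3 (u : C3 R) : Prop := u != 0 /\ qf u = 0.
Definition LC (w : C3 R) : Prop := w != 0 /\ qf w < 0.
(* x lies on the chain L_w = w^perp /\ S^3 *)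
Definition on_chain (w x : C3 R) : Prop := S3 x /\ hform x w = 0.

(* z represents pi_x(y), the (unique, for y /= x in S^3) intersection
   point of x^perp and y^perp *)
Definition is_pi (x y z : C3 R) : Prop := z != 0 /\ hform z x = 0 /\ hform z y = 0.
Definition pi_preim (x : C3 R) (A : C3 R -> Prop) (y : C3 R) : Prop :=
  S3 y /\ ~ proj_eq y x /\ exists z, is_pi x y z /\ A z.
Definition dball (u : C3 R) (r : R) (z : C3 R) : Prop := z != 0 /\ dE z u <= r.

Definition proj_set (A : set (C3 R)) : Prop :=
  (forall u, A u -> u != 0) /\ (forall u (c : R[i]), A u -> c != 0 -> A (c *: u)).

Definition realify (u : C3 R) : 'M[R]_(2, 3) :=
  \matrix_(i < 2, j < 3) (if i == 0 then complex.Re (u ord0 j) else complex.Im (u ord0 j)).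

(* compactness in P^2_C (quotient topology of the unit sphere S^5 of C^3):
   the unit representatives form a compact subset of C^3 = R^6 *)
Definition proj_compact (A : set (C3 R)) : Prop :=
  compact (realify @` (A `&` [set u | enorm u = 1])).
End Defs.

(* Main.v *)
Require Import Defs.
From mathcomp Require Import all_boot all_order all_algebra.
From mathcomp Require Import all_classical all_reals all_analysis.
From mathcomp Require Import complex.
From mathcomp Require Import ring lra.
Import Order.TTheory GRing.Theory Num.Theory.
Local Open Scope ring_scope.
Local Open Scope classical_set_scope.
Import Normc.
Set Implicit Arguments.
Unset Strict Implicit.


Section Alg.
Variable R : realType.
Implicit Types (a b u v X Y : C3 R).

Definition nn a : R := complex.Re (hdot a a).

Lemma hdotE a b : hdot a b = a ord0 0 * (b ord0 0)^* + a ord0 1 * (b ord0 1)^* + a ord0 2 * (b ord0 2)^*.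
Proof. rewrite /hdot !big_ord_recr big_ord0 /= add0r.
by congr (_ + _ + _); congr (a ord0 _ * (b ord0 _)^*); apply: val_inj. Qed.

Lemma abs2E (z : R[i]) : abs2 z = complex.Re z ^+ 2 + complex.Im z ^+ 2.
Proof. case: z => p q; rewrite /abs2; simpc; rewrite /=; ring. Qed.

Lemma abs2_ge0 (z : R[i]) : 0 <= abs2 z.
Proof. by rewrite abs2E addr_ge0 // sqr_ge0. Qed.

Lemma nnE a : nn a = abs2 (a ord0 0) + abs2 (a ord0 1) + abs2 (a ord0 2).
Proof.
rewrite /nn hdotE !abs2E.
move: (a ord0 0) (a ord0 1) (a ord0 2) => [a0 a0'] [a1 a1'] [a2 a2']; simpc; rewrite /=; ring.
Qed.

Lemma nn_ge0 a : 0 <= nn a.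
Proof. by rewrite nnE !addr_ge0 // abs2_ge0. Qed.

Lemma abs2_eq0 (z : R[i]) : abs2 z = 0 -> z = 0.
Proof.
case: z => p q; rewrite abs2E /= => h.
have hp : p ^+ 2 = 0 by apply/eqP; rewrite eq_le sqr_ge0 andbT -h lerDl sqr_ge0.
have hq : q ^+ 2 = 0 by apply/eqP; rewrite eq_le sqr_ge0 andbT -h lerDr sqr_ge0.
move: hp hq => /eqP; rewrite sqrf_eq0 => /eqP -> /eqP; rewrite sqrf_eq0 => /eqP -> //.
Qed.

Lemma nn_eq0 a : nn a = 0 -> a = 0.
Proof.
rewrite nnE => h.
have h0 := abs2_ge0 (a ord0 0); have h1 := abs2_ge0 (a ord0 1); have h2 := abs2_ge0 (a ord0 2).
have e0 : abs2 (a ord0 0) = 0 by lra.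
have e1 : abs2 (a ord0 1) = 0 by lra.
have e2 : abs2 (a ord0 2) = 0 by lra.
apply/rowP => j; rewrite mxE.
have [->|[->|->]] : j = 0 \/ j = 1 \/ j = 2.
  by case: j => [[|[|[|]]]] // ?; [left|right;left|right;right]; apply: val_inj.
- exact: abs2_eq0.
- exact: abs2_eq0.
- exact: abs2_eq0.
Qed.

Lemma nn_gt0 a : a != 0 -> 0 < nn a.
Proof.
move=> a0; rewrite lt_def nn_ge0 andbT; apply/eqP => /nn_eq0 h; by rewrite h eqxx in a0.
Qed.

Lemma nn0 : nn 0 = 0.
Proof. by rewrite nnE !mxE /abs2 /= !(mulr0, mul0r, subr0, addr0). Qed.

Lemma enorm_sq a : enorm a ^+ 2 = nn a.
Proof. by rewrite /enorm sqr_sqrtr // nn_ge0. Qed.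

Lemma enorm_ge0 a : 0 <= enorm a.
Proof. exact: sqrtr_ge0. Qed.

Lemma enorm_gt0 a : a != 0 -> 0 < enorm a.
Proof. by move=> /nn_gt0 h; rewrite /enorm sqrtr_gt0. Qed.

Lemma wedge2E a b : wedge2 a b = nn a * nn b - abs2 (hdot a b).
Proof. by rewrite /wedge2 !enorm_sq. Qed.

Lemma lagrange a b : nn a * nn b - abs2 (hdot a b) =
  abs2 (a ord0 0 * b ord0 1 - a ord0 1 * b ord0 0) + abs2 (a ord0 0 * b ord0 2 - a ord0 2 * b ord0 0)
  + abs2 (a ord0 1 * b ord0 2 - a ord0 2 * b ord0 1).
Proof.
rewrite /nn !hdotE !abs2E.
move: (a ord0 0) (a ord0 1) (a ord0 2) (b ord0 0) (b ord0 1) (b ord0 2) => [a0 a0'] [a1 a1'] [a2 a2'] [b0 b0'] [b1 b1'] [b2 b2']; simpc; rewrite /=.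
ring.
Qed.

Lemma wedge2_ge0 a b : 0 <= wedge2 a b.
Proof. by rewrite wedge2E lagrange !addr_ge0 // abs2_ge0. Qed.

Lemma CS a b : abs2 (hdot a b) <= nn a * nn b.
Proof. by rewrite -subr_ge0 -wedge2E wedge2_ge0. Qed.

Lemma normc_abs2 (z : R[i]) : normc z = Num.sqrt (abs2 z).
Proof. by case: z => p q; rewrite abs2E. Qed.

Lemma normc_ge0 (z : R[i]) : 0 <= normc z.
Proof. by rewrite normc_abs2 sqrtr_ge0. Qed.

Lemma normc_sq (z : R[i]) : normc z ^+ 2 = abs2 z.
Proof. by rewrite normc_abs2 sqr_sqrtr // abs2_ge0. Qed.

Lemma normc_real (t : R) : 0 <= t -> normc ((t%:C)%C) = t.
Proof. by move=> t0; rewrite normc_abs2 abs2E /= expr0n /= addr0 sqrtr_sqr ger0_norm. Qed.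

Lemma normc_conj (z : R[i]) : normc (z^*) = normc z.
Proof. by case: z => p q; rewrite /= sqrrN. Qed.

Lemma normc_CS a b : normc (hdot a b) <= enorm a * enorm b.
Proof.
by rewrite normc_abs2 /enorm -sqrtrM ?nn_ge0 // ler_wsqrtr // CS.
Qed.

End Alg.


Section Alg2.
Variable R : realType.
Implicit Types (a b u v X Y : C3 R).

Definition Jv a : C3 R := \row_(j < 3) (if j == 0 then a ord0 j else - a ord0 j).
Lemma JvE a : [/\ Jv a ord0 0 = a ord0 0, Jv a ord0 1 = - a ord0 1 & Jv a ord0 2 = - a ord0 2].
Proof. by rewrite !mxE. Qed.

Lemma hdotJ a b : hdot a (Jv b) = hform a b.
Proof.
rewrite hdotE /hform; have [-> -> ->] := JvE b.
move: (a ord0 0) (a ord0 1) (a ord0 2) (b ord0 0) (b ord0 1) (b ord0 2) => [a0 a0'] [a1 a1'] [a2 a2'] [b0 b0'] [b1 b1'] [b2 b2']; simpc.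
congr (Complex _ _); ring.
Qed.

Lemma hdotJJ a b : hdot (Jv a) (Jv b) = hdot a b.
Proof.
rewrite !hdotE; have [-> -> ->] := JvE b; have [-> -> ->] := JvE a.
move: (a ord0 0) (a ord0 1) (a ord0 2) (b ord0 0) (b ord0 1) (b ord0 2) => [a0 a0'] [a1 a1'] [a2 a2'] [b0 b0'] [b1 b1'] [b2 b2']; simpc.
congr (Complex _ _); ring.
Qed.

Lemma hformC a b : hform a b = (hform b a)^*.
Proof.
rewrite /hform.
move: (a ord0 0) (a ord0 1) (a ord0 2) (b ord0 0) (b ord0 1) (b ord0 2) => [a0 a0'] [a1 a1'] [a2 a2'] [b0 b0'] [b1 b1'] [b2 b2']; simpc.
congr (Complex _ _); ring.
Qed.

Lemma enormJ a : enorm (Jv a) = enorm a.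
Proof. by rewrite /enorm hdotJJ. Qed.

Lemma nnJ a : nn (Jv a) = nn a.
Proof. by rewrite /nn hdotJJ. Qed.

Lemma dEJ a b : dE (Jv a) (Jv b) = dE a b.
Proof. by rewrite /dE /wedge2 !enormJ hdotJJ. Qed.

Lemma Jv_neq0 a : a != 0 -> Jv a != 0.
Proof.
move=> /nn_gt0; rewrite -nnJ => h; apply/eqP => e; by rewrite e nn0 ltxx in h.
Qed.

Definition zc (X Y : C3 R) : C3 R := \row_(j < 3)
  (if j == 0 then (X ord0 1 * Y ord0 2 - X ord0 2 * Y ord0 1)^*
   else if j == 1 then (X ord0 2 * Y ord0 0 - X ord0 0 * Y ord0 2)^*
   else (X ord0 0 * Y ord0 1 - X ord0 1 * Y ord0 0)^*)%R.
Lemma zcE X Y : [/\ zc X Y ord0 0 = (X ord0 1 * Y ord0 2 - X ord0 2 * Y ord0 1)^*,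
  zc X Y ord0 1 = (X ord0 2 * Y ord0 0 - X ord0 0 * Y ord0 2)^* &
  zc X Y ord0 2 = (X ord0 0 * Y ord0 1 - X ord0 1 * Y ord0 0)^*].
Proof. by rewrite !mxE. Qed.

Lemma zc_orth1 X Y : hdot (zc X Y) X = 0.
Proof.
rewrite hdotE; have [-> -> ->] := zcE X Y.
move: (X ord0 0) (X ord0 1) (X ord0 2) (Y ord0 0) (Y ord0 1) (Y ord0 2) => [a0 a0'] [a1 a1'] [a2 a2'] [b0 b0'] [b1 b1'] [b2 b2']; simpc.
congr (Complex _ _); ring.
Qed.

Lemma zc_orth2 X Y : hdot (zc X Y) Y = 0.
Proof.
rewrite hdotE; have [-> -> ->] := zcE X Y.
move: (X ord0 0) (X ord0 1) (X ord0 2) (Y ord0 0) (Y ord0 1) (Y ord0 2) => [a0 a0'] [a1 a1'] [a2 a2'] [b0 b0'] [b1 b1'] [b2 b2']; simpc.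
congr (Complex _ _); ring.
Qed.

Lemma nn_zc X Y : nn (zc X Y) = wedge2 X Y.
Proof.
rewrite wedge2E /nn !hdotE abs2E; have [-> -> ->] := zcE X Y.
move: (X ord0 0) (X ord0 1) (X ord0 2) (Y ord0 0) (Y ord0 1) (Y ord0 2) => [a0 a0'] [a1 a1'] [a2 a2'] [b0 b0'] [b1 b1'] [b2 b2']; simpc; rewrite /=.
ring.
Qed.

Lemma hdotZ (c d : R[i]) a b : hdot (c *: a) (d *: b) = c * d^* * hdot a b.
Proof.
rewrite !hdotE !mxE.
move: c d (a ord0 0) (a ord0 1) (a ord0 2) (b ord0 0) (b ord0 1) (b ord0 2) => [c c'] [d d'] [a0 a0'] [a1 a1'] [a2 a2'] [b0 b0'] [b1 b1'] [b2 b2']; simpc.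
congr (Complex _ _); ring.
Qed.

Lemma hdotZr (d : R[i]) a b : hdot a (d *: b) = d^* * hdot a b.
Proof. by rewrite -(scale1r a) hdotZ scale1r mul1r. Qed.

Lemma abs2M (c d : R[i]) : abs2 (c * d) = abs2 c * abs2 d.
Proof.
rewrite !abs2E; move: c d => [c c'] [d d']; simpc; rewrite /=; ring.
Qed.

Lemma abs2_conj (c : R[i]) : abs2 (c^*) = abs2 c.
Proof. by rewrite -!normc_sq normc_conj. Qed.

Lemma nnZ (c : R[i]) a : nn (c *: a) = abs2 c * nn a.
Proof.
rewrite /nn hdotZ.
move: (hdot a a) c => [p q] [c c']; rewrite /abs2; simpc; rewrite /=; ring.
Qed.

Lemma nnZ' (c : R[i]) a : nn (c *: a) = abs2 c * nn a.
Proof. exact: nnZ. Qed.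

Lemma enormZ (c : R[i]) a : enorm (c *: a) = normc c * enorm a.
Proof. by rewrite /enorm -/(nn _) nnZ sqrtrM ?abs2_ge0 // -normc_abs2. Qed.

Lemma wedge2Z (c d : R[i]) a b : wedge2 (c *: a) (d *: b) = abs2 c * abs2 d * wedge2 a b.
Proof.
rewrite !wedge2E !nnZ hdotZ !abs2M abs2_conj; ring.
Qed.

Lemma dEZ (c d : R[i]) a b : c != 0 -> d != 0 -> dE (c *: a) (d *: b) = dE a b.
Proof.
move=> c0 d0; rewrite /dE wedge2Z !enormZ sqrtrM ?mulr_ge0 ?abs2_ge0 //.
rewrite sqrtrM ?abs2_ge0 // -!normc_abs2.
have nc : normc c != 0 by apply: contra c0 => /eqP/eq0_normc ->.
have nd : normc d != 0 by apply: contra d0 => /eqP/eq0_normc ->.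
have [ea|ea] := eqVneq (enorm a) 0.
  by rewrite ea !(mulr0, mul0r) invr0 !mulr0.
have [eb|eb] := eqVneq (enorm b) 0.
  by rewrite eb !(mulr0, mul0r) invr0 !mulr0.
field; rewrite ?nc ?nd ?ea ?eb //.
Qed.

Lemma nn_sub a b : nn (a - b) = nn a + nn b - 2 * complex.Re (hdot a b).
Proof.
rewrite /nn !hdotE !mxE.
move: (a ord0 0) (a ord0 1) (a ord0 2) (b ord0 0) (b ord0 1) (b ord0 2) => [a0 a0'] [a1 a1'] [a2 a2'] [b0 b0'] [b1 b1'] [b2 b2']; simpc; rewrite /=.
ring.
Qed.

End Alg2.


Section Alg3.
Variable R : realType.
Implicit Types (a b u v X Y : C3 R).

Lemma gram u X Y : nn (zc X Y) * nn u - abs2 (hdot (zc X Y) u) =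
  nn X * abs2 (hdot u Y) + nn Y * abs2 (hdot u X)
  - 2 * complex.Re (hdot u X * hdot X Y * hdot Y u).
Proof.
rewrite /nn !hdotE !abs2E; have [-> -> ->] := zcE X Y.
move: (u ord0 0) (u ord0 1) (u ord0 2) (X ord0 0) (X ord0 1) (X ord0 2) (Y ord0 0) (Y ord0 1) (Y ord0 2) => [a0 a0'] [a1 a1'] [a2 a2'] [b0 b0'] [b1 b1'] [b2 b2'] [c0 c0'] [c1 c1'] [c2 c2']; simpc; rewrite /=.
ring.
Qed.

End Alg3.


Section Alg4.
Variable R : realType.
Implicit Types (a b u v X Y : C3 R).

Definition wvec a a' : C3 R := ((nn a)%:C)%C *: a' - hdot a' a *: a.

Lemma hdot_w a a' Y : hdot (wvec a a') Y = ((nn a)%:C)%C * hdot a' Y - hdot a' a * hdot a Y.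
Proof.
rewrite /wvec /nn !hdotE !mxE.
move: (a ord0 0) (a ord0 1) (a ord0 2) (a' ord0 0) (a' ord0 1) (a' ord0 2) (Y ord0 0) (Y ord0 1) (Y ord0 2) => [a0 a0'] [a1 a1'] [a2 a2'] [b0 b0'] [b1 b1'] [b2 b2'] [c0 c0'] [c1 c1'] [c2 c2']; simpc.
congr (Complex _ _); ring.
Qed.

Lemma nn_w a a' : nn (wvec a a') = nn a * (nn a * nn a' - abs2 (hdot a a')).
Proof.
rewrite /wvec /nn !hdotE !mxE abs2E.
move: (a ord0 0) (a ord0 1) (a ord0 2) (a' ord0 0) (a' ord0 1) (a' ord0 2) => [a0 a0'] [a1 a1'] [a2 a2'] [b0 b0'] [b1 b1'] [b2 b2']; simpc; rewrite /=.
ring.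
Qed.

End Alg4.


Section Alg5.
Variable R : realType.
Implicit Types (a b u v X Y : C3 R).

Lemma triangle a a' Y : a != 0 ->
  normc (hdot a' Y) * enorm a <= normc (hdot a Y) * enorm a' + Num.sqrt (wedge2 a a') * enorm Y.
Proof.
move=> a0; have A0 := enorm_gt0 a0.
have ew : enorm (wvec a a') = enorm a * Num.sqrt (wedge2 a a').
  by rewrite /enorm -/(nn _) nn_w -wedge2E sqrtrM ?nn_ge0.
have h1 := normc_CS (wvec a a') Y; rewrite hdot_w ew in h1.
have h2 : normc (((nn a)%:C)%C * hdot a' Y) = nn a * normc (hdot a' Y).
  by rewrite normcM normc_real // nn_ge0.
have h3 : normc (((nn a)%:C)%C * hdot a' Y) <=
   normc (((nn a)%:C)%C * hdot a' Y - hdot a' a * hdot a Y) + normc (hdot a' a * hdot a Y).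
  by rewrite -[X in normc X <= _](subrK (hdot a' a * hdot a Y)) le_normcD.
have h4 : normc (hdot a' a * hdot a Y) <= enorm a' * enorm a * normc (hdot a Y).
  by rewrite normcM ler_wpM2r ?normc_ge0 ?normc_CS.
rewrite h2 in h3.
have hW := sqrtr_ge0 (wedge2 a a').
have hY := enorm_ge0 Y.
have hA' := enorm_ge0 a'.
rewrite -(ler_pM2l A0).
set g := normc (hdot a' Y) in h3 *; set be := normc (hdot a Y) in h4 *.
set A := enorm a in h1 h3 h4 A0 *.
set sW := Num.sqrt (wedge2 a a') in h1 hW *.
have -> : A * (g * A) = nn a * g by rewrite -enorm_sq /A; ring.
set N1 := normc _ in h1 h3; set N2 := normc _ in h3 h4.
nra.
Qed.

Definition cc a Y : R := normc (hdot a Y) / (enorm a * enorm Y).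

Lemma cc_ge0 a Y : 0 <= cc a Y.
Proof. by rewrite /cc divr_ge0 ?mulr_ge0 ?normc_ge0 ?enorm_ge0. Qed.

Lemma dE_ge0 a b : 0 <= dE a b.
Proof. by rewrite /dE divr_ge0 ?mulr_ge0 ?sqrtr_ge0 ?enorm_ge0. Qed.

Lemma triangle' a a' Y : a != 0 -> a' != 0 -> Y != 0 ->
  cc a' Y <= cc a Y + dE a a'.
Proof.
move=> a0 a'0 Y0.
have A0 := enorm_gt0 a0; have A'0 := enorm_gt0 a'0; have Y0' := enorm_gt0 Y0.
have P0 : 0 < enorm a * enorm a' * enorm Y by rewrite !mulr_gt0.
rewrite -(ler_pM2r P0).
have e1 : cc a' Y * (enorm a * enorm a' * enorm Y) = normc (hdot a' Y) * enorm a.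
  rewrite /cc; field; rewrite ?gt_eqF //.
have e2 : (cc a Y + dE a a') * (enorm a * enorm a' * enorm Y) =
   normc (hdot a Y) * enorm a' + Num.sqrt (wedge2 a a') * enorm Y.
  rewrite /cc /dE; field; rewrite ?gt_eqF //.
by rewrite e1 e2 triangle.
Qed.

Lemma dE_zc X u Y : hdot u X = 0 -> X != 0 -> u != 0 -> Y != 0 -> 0 < wedge2 X Y ->
  dE (zc X Y) u = cc u Y / dE X Y.
Proof.
move=> hu X0 u0 Y0 W0.
have ew : wedge2 (zc X Y) u = nn X * abs2 (hdot u Y).
  by rewrite wedge2E gram hu /abs2 !(mul0r, mulr0) /= !(mulr0, mul0r, subr0, addr0).
have ez : enorm (zc X Y) = Num.sqrt (wedge2 X Y) by rewrite /enorm -/(nn _) nn_zc.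
rewrite /dE ew ez sqrtrM ?nn_ge0 // -normc_abs2 -/(enorm X) /cc.
have A0 := enorm_gt0 X0; have A'0 := enorm_gt0 u0; have Y0' := enorm_gt0 Y0.
have sW : 0 < Num.sqrt (wedge2 X Y) by rewrite sqrtr_gt0.
field; rewrite ?gt_eqF //.
Qed.

End Alg5.


Section Top.
Variable R : realType.
Import numFieldNormedType.Exports.
Implicit Types (a b u v w X Y : C3 R).

Lemma realC_neq0 (t : R) : t != 0 -> ((t%:C)%C : R[i]) != 0.
Proof. by move=> t0; apply/eqP => /(congr1 (@complex.Re R)) /= /eqP; rewrite (negbTE t0). Qed.

Lemma normalize a : a != 0 ->
  let s := (((enorm a)^-1)%:C)%C in s != 0 /\ enorm (s *: a) = 1.
Proof.
move=> a0 s; have A0 := enorm_gt0 a0; split.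
  by apply: realC_neq0; rewrite invr_eq0 gt_eqF.
by rewrite enormZ normc_real ?invr_ge0 ?ltW // mulVf // gt_eqF.
Qed.

Lemma realify_inj a b : realify a = realify b -> a = b.
Proof.
move=> e; apply/rowP => j.
have e0 := congr1 (fun M : 'M[R]_(2,3) => M 0 j) e.
have e1 := congr1 (fun M : 'M[R]_(2,3) => M 1 j) e.
move: e0 e1; rewrite /= !mxE /=.
by case: (a ord0 j) => p q; case: (b ord0 j) => p' q' /= -> ->.
Qed.

Lemma sqRe_le (z : R[i]) : complex.Re z ^+ 2 <= abs2 z.
Proof. by rewrite abs2E lerDl sqr_ge0. Qed.
Lemma sqIm_le (z : R[i]) : complex.Im z ^+ 2 <= abs2 z.
Proof. by rewrite abs2E lerDr sqr_ge0. Qed.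

Lemma entry_le_nn a (j : 'I_3) : abs2 (a ord0 j) <= nn a.
Proof.
rewrite nnE.
have h0 := abs2_ge0 (a ord0 0); have h1 := abs2_ge0 (a ord0 1); have h2 := abs2_ge0 (a ord0 2).
have [->|[->|->]] : j = 0 \/ j = 1 \/ j = 2.
  by case: j => [[|[|[|]]]] // ?; [left|right;left|right;right]; apply: val_inj.
all: lra.
Qed.

Lemma abs_le_sqrt (t S : R) : t ^+ 2 <= S -> `|t| <= Num.sqrt S.
Proof. by move=> h; rewrite -sqrtr_sqr ler_wsqrtr. Qed.

Lemma realify_dist a b : `|realify a - realify b| <= Num.sqrt (nn (a - b)).
Proof.
change (mx_norm (realify a - realify b) <= Num.sqrt (nn (a - b))).
rewrite mx_normrE; apply: bigmax_le; first exact: sqrtr_ge0.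
move=> [i j] _ /=; apply: abs_le_sqrt.
have -> : (realify a - realify b) i j = if i == 0 then complex.Re ((a - b) ord0 j) else complex.Im ((a - b) ord0 j).
  rewrite !mxE; case: (i == 0); by case: (a ord0 j) => ? ?; case: (b ord0 j) => ? ?.
case: (i == 0).
- exact: le_trans (sqRe_le _) (entry_le_nn _ _).
- exact: le_trans (sqIm_le _) (entry_le_nn _ _).
Qed.

End Top.


Section Top2.
Variable R : realType.
Import numFieldNormedType.Exports.
Implicit Types (a b u v w X Y : C3 R).

Lemma phase (c : R[i]) : exists d : R[i], [/\ d != 0, normc d = 1 & d^* * c = ((normc c)%:C)%C].
Proof.
have [->|c0] := eqVneq c 0.
  exists 1; split; first exact: oner_neq0.
    by rewrite normc1.
  by rewrite mulr0 normc0.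
have nc : normc c != 0 by apply: contra c0 => /eqP/eq0_normc ->.
exists (((normc c)%:C)%C / c)^*.
have n1 : normc (((normc c)%:C)%C / c) = 1.
  by rewrite normcM normcV normc_real ?normc_ge0 // mulfV.
split.
- apply/eqP => e; move: n1; rewrite -normc_conj e normc0 => /eqP; by rewrite eq_sym oner_eq0.
- by rewrite normc_conj.
- by rewrite conjCK divfK.
Qed.

Lemma unit_bound (B V : set (C3 R)) (del : R) :
  proj_set V -> 0 <= del ->
  (forall b w, B b -> V w -> enorm b = 1 -> enorm w = 1 -> del <= `|realify b - realify w|) ->
  forall b v, B b -> V v -> enorm b = 1 -> enorm v = 1 -> del ^+ 2 <= 2 * dE b v ^+ 2.
Proof.
move=> [_ Vc] d0 H b v Bb Vv eb ev.
have [d [d0' nd dc]] := phase (hdot b v).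
set w := d *: v.
have Vw : V w by apply: Vc.
have ew : enorm w = 1 by rewrite enormZ nd ev mulr1.
have h1 := le_trans (H b w Bb Vw eb ew) (realify_dist b w).
have nb : nn b = 1 by rewrite -enorm_sq eb expr1n.
have nw : nn w = 1 by rewrite -enorm_sq ew expr1n.
rewrite nn_sub nb nw /w hdotZr dc /= in h1.
set nc := normc (hdot b v) in h1 dc.
have nc0 : 0 <= nc := normc_ge0 _.
have nc1 : nc <= 1 by rewrite /nc; have := normc_CS b v; rewrite eb ev mulr1.
have S0 : 0 <= 1 + 1 - 2 * nc by lra.
have h2 : del ^+ 2 <= 1 + 1 - 2 * nc.
  have := ler_pM d0 d0 h1 h1; by rewrite -expr2 -[Num.sqrt _ * _]expr2 sqr_sqrtr.
have hdE : dE b v ^+ 2 = 1 - nc ^+ 2.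
  rewrite /dE wedge2E nb -enorm_sq ev expr1n eb !mul1r invr1 mulr1 sqr_sqrtr.
    by rewrite /nc normc_sq.
  by rewrite -normc_sq -/nc; nra.
rewrite hdE; nra.
Qed.

End Top2.


Section Top3.
Variable R : realType.
Import numFieldNormedType.Exports.

Lemma pos_dist (B V : set (C3 R)) : proj_set B -> proj_set V -> B !=set0 -> V !=set0 ->
  B `&` V = set0 -> proj_compact B -> proj_compact V ->
  exists m : R, 0 < m /\ forall b v, B b -> V v -> m <= dE b v.
Proof.
move=> [Bnz Bc] [Vnz Vc] [b0 Bb0] [v0 Vv0] BV cB cV.
have [hs0 hn0] := normalize (Bnz _ Bb0).
have [ht0 htn0] := normalize (Vnz _ Vv0).
rewrite /proj_compact in cB cV.
set KB := (@realify R) @` (B `&` [set u | enorm u = 1]) in cB.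
set KV := (@realify R) @` (V `&` [set u | enorm u = 1]) in cV.
have ne : (KB `*` KV) !=set0.
  exists (realify ((((enorm b0)^-1)%:C)%C *: b0), realify ((((enorm v0)^-1)%:C)%C *: v0)).
  split; [exists ((((enorm b0)^-1)%:C)%C *: b0) | exists ((((enorm v0)^-1)%:C)%C *: v0)] => //.
    by split => //; apply: Bc.
  by split => //; apply: Vc.
have cont : {within KB `*` KV, continuous (fun pq : 'M[R]_(2,3) * 'M[R]_(2,3) => `|pq.1 - pq.2|)}.
  apply: continuous_subspaceT => x; apply: continuous_comp; [exact: sub_continuous | exact: norm_continuous].
have [[p0 q0]] := compact_EVT_min ne (compact_setX cB cV) cont.
rewrite in_setE => -[[b [Bb eb] <-] [w [Vw ew] <-]] /= Hmin.
set del := `|realify b - realify w|.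
have del0 : 0 < del.
  rewrite /del normr_gt0 subr_eq0; apply/eqP => /realify_inj e.
  have : (B `&` V) w by split => //; rewrite -e.
  by rewrite BV.
have H : forall b' w', B b' -> V w' -> enorm b' = 1 -> enorm w' = 1 ->
    del <= `|realify b' - realify w'|.
  move=> b' w' Bb' Vw' eb' ew'; apply: (Hmin (realify b', realify w')).
  by rewrite in_setE; split; [exists b'|exists w'].
exists (del / 2); split; first by rewrite divr_gt0.
move=> b1 v1 Bb1 Vv1.
have [s0 en1] := normalize (Bnz _ Bb1).
have [t0 en2] := normalize (Vnz _ Vv1).
rewrite -(dEZ _ _ s0 t0).
have := unit_bound (conj Vnz Vc) (ltW del0) H (Bc _ _ Bb1 s0) (Vc _ _ Vv1 t0) en1 en2.
have := dE_ge0 ((((enorm b1)^-1)%:C)%C *: b1) ((((enorm v1)^-1)%:C)%C *: v1).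
set D := dE _ _ => D0 h; nra.
Qed.

End Top3.

Unset Implicit Arguments.
Set Strict Implicit.

Lemma wedge2J (R : realType) (a b : C3 R) : wedge2 (Jv a) (Jv b) = wedge2 a b.
Proof. by rewrite /wedge2 !enormJ hdotJJ. Qed.

Theorem lemma5p12 (R : realType) (B V : set (C3 R)) :
  proj_set B -> proj_set V ->
  B `<=` S3 (R:=R) -> V `<=` S3 (R:=R) ->
  B !=set0 -> V !=set0 -> B `&` V = set0 ->
  proj_compact B -> proj_compact V ->
  exists Cst : R, 0 < Cst /\
    forall (x x' u u' : C3 R) (r : R),
      B x -> B x' -> LC u -> LC u' ->
      on_chain u x -> on_chain u' x' ->
      (exists v, V v /\ on_chain u v) -> (exists v', V v' /\ on_chain u' v') ->
      0 < r ->
      (pi_preim x (dball u r) `&` V) `<=`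
        pi_preim x' (dball u' (Cst * (r + dE u u'))).
Proof.
move=> pB pV BS VS neB neV BV cB cV.
have [m [m0 Hm]] := pos_dist pB pV neB neV BV cB cV.
exists m^-1; split; first by rewrite invr_gt0.
move=> x x' u u' r Bx Bx' [u0 _] [u'0 _] chx chx' _ _ r0 y
  [[Sy [nproj [z [[z0 [zx zy]] [_ dzu]]]]] Vy].
split; first exact: VS.
split.
  move=> [c [c0 e]]; have : (B `&` V) y by split => //; rewrite e; apply: pB.2.
  by rewrite BV.
have x'0 : x' != 0 by apply: pB.1.
have y0 : y != 0 by apply: pV.1.
have hm := Hm x' y Bx' Vy.
have W0 : 0 < wedge2 x' y.
  rewrite lt_def wedge2_ge0 andbT; apply/eqP => e.
  by move: hm; rewrite /dE e sqrtr0 mul0r => /(lt_le_trans m0); rewrite ltxx.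
have X0 := Jv_neq0 x'0; have Y0 := Jv_neq0 y0.
have hX : hdot u' (Jv x') = 0 by rewrite hdotJ hformC chx'.2 conjC0.
have W0' : 0 < wedge2 (Jv x') (Jv y) by rewrite wedge2J.
have z'0 : zc (Jv x') (Jv y) != 0.
  apply/eqP => e; move: W0'; rewrite -nn_zc e nn0 ltxx //.
exists (zc (Jv x') (Jv y)); split.
  by split => //; split; rewrite -hdotJ ?zc_orth1 ?zc_orth2.
split => //.
rewrite dE_zc // dEJ.
have h1 := triangle' u0 u'0 Y0.
have h2 := triangle' z0 u0 Y0.
have ccz : cc z (Jv y) = 0 by rewrite /cc hdotJ zy normc0 mul0r.
rewrite ccz add0r in h2.
set C := cc u' (Jv y) in h1 *.
set D := dE x' y in hm *.
have C0 : 0 <= C := cc_ge0 _ _.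
have D0 : 0 < D := lt_le_trans m0 hm.
have iD : D^-1 <= m^-1 by rewrite lef_pV2 ?posrE.
have iD0 : 0 <= D^-1 by rewrite invr_ge0 ltW.
have im0 : 0 < m^-1 by rewrite invr_gt0.
set d := dE u u' in h1 *.
set c := cc u (Jv y) in h1 h2.
nra.
Qed.
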